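(* Let $m<M$ be real numbers and let $X$ be a random variable taking values in $[m,M]$, either discrete (taking finitely many values $x_1,\dots,x_n\in[m,M]$ with probabilities $p_1,\dots,p_n$) or continuous (with probability density $f$ on $[m,M]$). Let $\mu_4$ denote the fourth central moment of $X$. Then $$\mu_4\le \frac{(M-m)^4}{12}.$$
   Context: The mean is $\mu_1'=\sum_{i=1}^n p_i x_i$ (discrete case) or $\mu_1'=\int_m^M x f(x)\,dx$ (continuous case), where $\sum p_i=1$, resp. $\int_m^M f(x)\,dx=1$. The $r$-th central moment is $\mu_r=\sum_{i=1}^n p_i (x_i-\mu_1')^r$, resp. $\mu_r=\int_m^M (x-\mu_1')^r f(x)\,dx$. *)

(* Defs.v *)
From HB Require Import structures.
From mathcomp Require Import all_boot all_order all_algebra.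
From mathcomp Require Import all_classical all_reals all_analysis.
Set Implicit Arguments. Unset Strict Implicit. Unset Printing Implicit Defensive.
Import Order.TTheory GRing.Theory Num.Theory.
Local Open Scope classical_set_scope.
Local Open Scope ring_scope.

Definition disc_mean (R : realType) (n : nat) (x p : 'I_n -> R) : R :=
  \sum_(i < n) p i * x i.
Definition disc_central_moment (R : realType) (r n : nat) (x p : 'I_n -> R) : R :=
  \sum_(i < n) p i * (x i - disc_mean x p) ^+ r.

Definition cont_mean (R : realType) (m M : R) (f : R -> R) : R :=
  Rintegral (@lebesgue_measure R) `[m, M] (fun t => t * f t).
Definition cont_central_moment (R : realType) (r : nat) (m M : R) (f : R -> R) : R :=
  Rintegral (@lebesgue_measure R) `[m, M]
    (fun t => (t - cont_mean m M f) ^+ r * f t).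

(* Main.v *)
Require Import Defs.
From HB Require Import structures.
From mathcomp Require Import all_boot all_order all_algebra.
From mathcomp Require Import all_classical all_reals all_analysis.
From mathcomp Require Import ring lra.
Import Order.TTheory GRing.Theory Num.Theory.
Local Open Scope classical_set_scope.
Local Open Scope ring_scope.
Section H.
Context {R : realType}.

Definition cB (m M mu : R) := ((m - mu) + (M - mu)) * ((m - mu)^+2 + (M - mu)^+2).
Definition cA (m M mu : R) := (m - mu)^+4 - (m - mu) * cB m M mu.

Lemma key_pt (m M mu x : R) : m <= x <= M ->
  (x - mu)^+4 <= cA m M mu + cB m M mu * (x - mu).
Proof.
move=> /andP[hm hM]; rewrite /cA /cB.
set a := m - mu; set b := M - mu; set y := x - mu.
have ha : 0 <= y - a by rewrite /y /a; lra.
have hb : 0 <= b - y by rewrite /y /b; lra.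
have hQ : 0 <= y^+2 + (a+b)*y + (a^+2 + a*b + b^+2).
  have e : y^+2 + (a+b)*y + (a^+2 + a*b + b^+2) =
     (y + (a+b)/2)^+2 + ((a - b)^+2 + (a+b)^+2 + (a+b)^+2) / 4 by field.
  rewrite e; apply: addr_ge0; first exact: sqr_ge0.
  by apply: divr_ge0 => //; rewrite !addr_ge0 // sqr_ge0.
have h1 : 0 <= (y - a) * (b - y) by apply: mulr_ge0.
have h := mulr_ge0 h1 hQ.
rewrite -subr_ge0; apply: (le_trans h); rewrite le_eqVlt; apply/orP; left; apply/eqP.
ring.
Qed.

Lemma key_A (m M mu : R) : cA m M mu <= (M - m)^+4 / 12.
Proof.
rewrite /cA /cB.
have -> : M - m = (M - mu) - (m - mu) by ring.
set a := m - mu; set b := M - mu.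
have h : 0 <= ((b - a)^+2 + 6 * a * b)^+2 by apply: sqr_ge0.
rewrite -subr_ge0.
have -> : (b - a) ^+ 4 / 12 - (a ^+ 4 - a * ((a + b) * (a ^+ 2 + b ^+ 2))) =
   ((b - a)^+2 + 6 * a * b)^+2 / 12 by field.
by apply: divr_ge0.
Qed.
End H.
Lemma disc (R : realType) (m M : R) (n : nat) (x p : 'I_n -> R) :
      (forall i, 0 <= p i) ->
      \sum_(i < n) p i = 1 ->
      (forall i, m <= x i <= M) ->
      disc_central_moment 4 x p <= (M - m) ^+ 4 / 12.
Proof.
move=> hp h1 hx; rewrite /disc_central_moment.
set mu := disc_mean x p.
apply: (le_trans _ (key_A m M mu)).
apply: (@le_trans _ _ (\sum_(i < n) p i * (cA m M mu + cB m M mu * (x i - mu)))).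
  by apply: ler_sum => i _; by rewrite ler_wpM2l // key_pt.
have -> : \sum_(i < n) p i * (cA m M mu + cB m M mu * (x i - mu)) =
  \sum_(i < n) (cA m M mu * p i + cB m M mu * (p i * x i) - (cB m M mu * mu) * p i).
  by apply: eq_bigr => i _; ring.
rewrite big_split big_split /= sumrN -!mulr_sumr h1.
rewrite -/(disc_mean x p) -/mu.
rewrite le_eqVlt; apply/orP; left; apply/eqP; ring.
Qed.
Section C.
Context {R : realType}.
Notation mu := (@lebesgue_measure R).

Lemma intM (D : set R) (f h : R -> R) (K : R) : measurable D ->
  measurable_fun D h -> (forall t, D t -> `|h t| <= K) ->
  mu.-integrable D (fun t => (f t)%:E) ->
  mu.-integrable D (EFin \o (fun t => h t * f t)).
Proof.
move=> mD mh hK hf.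
have hb : [bounded h x | x in D].
  exists K; split; first by rewrite num_real.
  move=> y Ky t Dt /=; exact: le_trans (hK t Dt) (ltW Ky).
have := @integrableMr _ _ _ mu D mD h (EFin \o f) mh hb hf.
by apply: eq_integrable => // t _ /=; rewrite EFinM.
Qed.

Lemma inD (m M t : R) : `[m, M]%classic t -> m <= t <= M.
Proof. by rewrite /= in_itv. Qed.
Arguments inD {m M t}.

Lemma cont (m M : R) (f : R -> R) :
      measurable_fun `[m, M] f ->
      (forall t, m <= t <= M -> 0 <= f t) ->
      (@lebesgue_measure R).-integrable `[m, M] (fun t => (f t)%:E) ->
      Rintegral (@lebesgue_measure R) `[m, M] f = 1 ->
      cont_central_moment 4 m M f <= (M - m) ^+ 4 / 12.
Proof.
move=> mf f0 fi f1; rewrite /cont_central_moment.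
set c := cont_mean m M f.
have mD : measurable (`[m, M]%classic : set R) by [].
set C := `|m - c| + `|M - c|.
have hC : forall t, `[m, M]%classic t -> `|t - c| <= C.
  move=> t /inD /andP[h1 h2]; rewrite /C ler_norml.
  have := ler_norm (m - c); have := ler_norm (M - c).
  have := ler_norm (- (m - c)); have := ler_norm (- (M - c)).
  rewrite !normrN; lra.
have i0 : mu.-integrable `[m, M] (EFin \o f) by [].
have i1 : mu.-integrable `[m, M] (EFin \o (fun t => t * f t)).
  apply: (intM _ _ _ (`|m| + `|M|)) => //.
  move=> t /inD /andP[h1 h2]; rewrite ler_norml.
  have := ler_norm m; have := ler_norm M.
  have := ler_norm (- m); have := ler_norm (- M).
  rewrite !normrN; lra.
have i4 : mu.-integrable `[m, M] (EFin \o (fun t => (t - c)^+4 * f t)).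
  apply: (intM _ _ _ (C ^+ 4)) => //.
    by apply: measurable_realfun.measurable_funX; apply: measurable_realfun.measurable_funB.
  move=> t /hC h; rewrite normrX.
  have h0 := normr_ge0 (t - c).
  by rewrite lerXn2r // ?nnegrE // (le_trans h0 h).
set A := cA m M c; set B := cB m M c.
have iL : mu.-integrable `[m, M] (EFin \o (fun t => (A + B * (t - c)) * f t)).
  apply: (intM _ _ _ (`|A| + `|B| * C)) => //.
    by apply: measurable_realfun.measurable_funD => //; apply: measurable_realfun.measurable_funM => //; apply: measurable_realfun.measurable_funB.
  move=> t /hC h; apply: (le_trans (ler_normD _ _)); rewrite lerD2l normrM.
  by rewrite ler_wpM2l.
apply: (le_trans _ (key_A m M c)).
apply: (le_trans (@le_Rintegral _ _ _ mu _ _ _ mD i4 iL _)).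
  move=> t Dt; rewrite ler_wpM2r //; first by apply: f0; exact: inD.
  exact: (key_pt _ _ c _ (inD Dt)).
have -> : \int[mu]_(x in `[m, M]) ((A + B * (x - c)) * f x) =
   \int[mu]_(x in `[m, M]) ((A * f x + B * (x * f x)) - (B * c) * f x).
  by apply: eq_Rintegral => t _; ring.
have iA : mu.-integrable `[m, M] (EFin \o (fun x => A * f x)).
  by apply: (intM _ _ _ (`|A|)).
have iB : mu.-integrable `[m, M] (EFin \o (fun x => B * (x * f x))).
  have := @integrableZl _ _ _ mu _ mD B _ i1.
  by apply: eq_integrable => // t _ /=; rewrite EFinM.
have iBc : mu.-integrable `[m, M] (EFin \o (fun x => (B * c) * f x)).
  by apply: (intM _ _ _ (`|B * c|)).
rewrite (@RintegralB _ _ _ mu) //; last first.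
  have := @integrableD _ _ _ mu _ mD _ _ iA iB.
  by apply: eq_integrable => // t _ /=; rewrite EFinD.
rewrite (@RintegralD _ _ _ mu) // !(@RintegralZl _ _ _ mu) // f1 -/(cont_mean m M f) -/c.
by rewrite /A !mulr1 addrK.
Qed.
End C.

Theorem theorem2p1 (R : realType) (m M : R) (hmM : m < M) :
  (forall (n : nat) (x p : 'I_n -> R),
      (forall i, 0 <= p i) ->
      \sum_(i < n) p i = 1 ->
      (forall i, m <= x i <= M) ->
      disc_central_moment 4 x p <= (M - m) ^+ 4 / 12)
  /\
  (forall f : R -> R,
      measurable_fun `[m, M] f ->
      (forall t, m <= t <= M -> 0 <= f t) ->
      (@lebesgue_measure R).-integrable `[m, M] (fun t => (f t)%:E) ->
      Rintegral (@lebesgue_measure R) `[m, M] f = 1 ->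
      cont_central_moment 4 m M f <= (M - m) ^+ 4 / 12).
Proof.
split; [exact: disc | exact: cont].
Qed.
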